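(* Let $d,N\in\mathbb{N}$, $0<\lambda<1$ and $\epsilon\ge 0$. Let $\bm G:=\frac1N \bm Z\bm M\bm Z^\top\in\mathbb{R}^{(d+1)\times(d+1)}$; this matrix does not depend on $\bm\Delta$. For $i,j\in[d+1]$ and $k\in[d]$ put $$h_{i,j,k}:=\mathbb{E}_{c\sim U([d]),\,\{(\bm x_n,y_n)\}_{n=1}^{N+1}\overset{\text{i.i.d.}}{\sim}\mathcal{D}^{\rm tr}_c}\big[G_{i,j}\,(y_{N+1}x_{N+1,k}-\epsilon)\big].$$ Then the minimum value of the adversarial pretraining problem $$\min_{\bm P,\bm Q\in[0,1]^{(d+1)\times(d+1)}}\ \mathbb{E}_{c\sim U([d]),\,\{(\bm x_n,y_n)\}_{n=1}^{N+1}\overset{\text{i.i.d.}}{\sim}\mathcal{D}^{\rm tr}_c}\Big[\max_{\|\bm\Delta\|_\infty\le\epsilon}-y_{N+1}[f(\bm Z;\bm P,\bm Q)]_{d+1,N+1}\Big]$$ equals $$-\max_{\bm b\in\{0,1\}^{d+1}}\ \sum_{j=1}^{d+1}\sum_{k=1}^{d}\max\Big(0,\ \sum_{i=1}^{d+1} b_i\,h_{i,j,k}\Big).$$ Moreover, if $\bm b^\star\in\{0,1\}^{d+1}$ attains this maximum, then a global minimizer of the pretraining problem is given by $\bm P=\begin{bmatrix}\bm 0_{d,d+1}\\ (\bm b^\star)^\top\end{bmatrix}$ and $\bm Q=\begin{bmatrix}\bm A & \bm 0_{d+1}\end{bmatrix}$, where $\bm A\in\{0,1\}^{(d+1)\times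 d}$ is defined by $A_{j,k}=1$ if $\sum_{i=1}^{d+1} b^\star_i h_{i,j,k}\ge 0$ and $A_{j,k}=0$ otherwise.
   Context: For $n\in\mathbb{N}$, $[n]:=\{1,\dots,n\}$. $U(\mathcal S)$ is the uniform distribution on a set $\mathcal S$. $\bm 1_{a}$, $\bm 1_{a,b}$, $\bm 0_a$, $\bm 0_{a,b}$, $\bm I_a$ denote the all-ones vector/matrix, the all-zeros vector/matrix and the identity. Training distributions: for $c\in[d]$ and $0<\lambda<1$, a sample $(\bm x,y)\sim\mathcal{D}^{\rm tr}_c$ with $\bm x\in\mathbb{R}^d$ is generated as follows: $y\sim U(\{\pm1\})$, $x_c=y$, and for each $i\ne c$, $x_i\sim U([0,\lambda])$ if $y=1$ and $x_i\sim U([-\lambda,0])$ if $y=-1$; given $y$, the coordinates $x_i$ are mutually independent. Transformer: given demonstrations $(\bm x_1,y_1),\dots,(\bm x_N,y_N)$, a query $\bm x_{N+1}\in\mathbb{R}^d$ and a perturbation $\bm\Delta\in\mathbb{R}^d$, let $\bm Z\in\mathbb{R}^{(d+1)\times(N+1)}$ be the matrix whose $n$-th column is $(\bm x_n^\top, y_n)^\top$ for $n\le N$ and whose last column is $((\bm x_{N+1}+\bm\Delta)^\top,0)^\top$. Let $\bm M:=\begin{bmatrix}\bm I_N&0\\0&0\end{bmatrix}\in\mathbb{R}^{(N+1)\times(N+1)}$ and, for $\bm P,\bm Q\in\mathbb{R}^{(d+1)\times(d+1)}$, $f(\bm Z;\bm P,\bm Q):=\frac1N\bm P\bm Z\bm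 M\bm Z^\top\bm Q\bm Z$. $[\cdot]_{d+1,N+1}$ denotes the $(d+1,N+1)$ entry. *)

(* Defs.v *)
From HB Require Import structures.
From mathcomp Require Import all_boot all_order all_algebra.
From mathcomp Require Import all_classical all_reals all_analysis.
Set Implicit Arguments. Unset Strict Implicit. Unset Printing Implicit Defensive.
Import Order.TTheory GRing.Theory Num.Theory.
Local Open Scope classical_set_scope.
Local Open Scope ring_scope.

Section Defs.
Context {R : realType}.

Fixpoint iint (I : eqType) (J : I -> (R -> \bar R) -> \bar R) (s : seq I)
  (F : (I -> R) -> \bar R) : \bar R :=
  match s with
  | [::] => F (fun _ => 0)
  | i :: s' => J i (fun t => iint J s' (fun g => F (fun j => if j == i then t else g j)))
  end.

(* label encoded by a boolean: true <-> y = 1, false <-> y = -1 *)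
Definition sgn (b : bool) : R := if b then 1 else -1.

(* One-dimensional expectation for coordinate i of a sample with label y,
   under D^tr_c : x_c = y (Dirac), x_i ~ U([0,lam]) if y = 1,
   x_i ~ U([-lam,0]) if y = -1 (i <> c). *)
Definition coord_exp (lam : R) (d : nat) (c i : 'I_d) (y : bool)
  (g : R -> \bar R) : \bar R :=
  if i == c then g (sgn y)
  else ((lam^-1)%:E *
        \int[@lebesgue_measure R]_(t in (if y then [set t : R | (0 <= t <= lam)%R]
                                          else [set t : R | (- lam <= t <= 0)%R]))
          g t)%E.

(* Expectation over c ~ U([d]) and (x_n, y_n), n = 1..N+1, i.i.d. ~ D^tr_c.
   Sample n (0-based, in 'I_(N.+1); the last one, ord_max, is the query) has
   features X n : row of X and label Y n.  The labels are uniform in {+-1}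
   (each of the 2^(N+1) sign patterns has probability 2^-(N+1)); given the
   labels, all coordinates are independent. *)
Definition Exp (lam : R) (d N : nat)
  (F : ('I_N.+1 -> R) -> 'M[R]_(N.+1, d) -> \bar R) : \bar R :=
  (\sum_(c < d) ((d%:R)^-1)%:E *
     \sum_(y : {ffun 'I_N.+1 -> bool})
        ((2%:R ^- N.+1)%:E *
         iint (fun p : 'I_N.+1 * 'I_d => coord_exp lam c p.2 (y p.1))
              (enum {: 'I_N.+1 * 'I_d})
              (fun g => F (fun n => sgn (y n)) (\matrix_(n, k) g (n, k)))))%E.

Definition Mmask (N : nat) : 'M[R]_(N.+1) :=
  \matrix_(i, j) ((i == j) && (i != ord_max))%:R.

(* The prompt matrix Z in R^{(d+1) x (N+1)}: column n < N is (x_n; y_n),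
   the last column is (x_{N+1} + Delta; 0). *)
Definition Zmat (d N : nat) (Y : 'I_N.+1 -> R) (X : 'M[R]_(N.+1, d))
  (Delta : 'cV[R]_d) : 'M[R]_(d.+1, N.+1) :=
  \matrix_(i, n)
    match unlift ord_max i with
    | Some k => X n k + (if n == ord_max then Delta k 0 else 0)
    | None => if n == ord_max then 0 else Y n
    end.

Definition fTF (d N : nat) (P Q : 'M[R]_(d.+1)) (Z : 'M[R]_(d.+1, N.+1)) :
  'M[R]_(d.+1, N.+1) :=
  (N%:R)^-1 *: (P *m Z *m Mmask N *m Z^T *m Q *m Z).

(* G = (1/N) Z M Z^T (independent of Delta; computed with Delta = 0) *)
Definition Gmat (d N : nat) (Y : 'I_N.+1 -> R) (X : 'M[R]_(N.+1, d)) :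
  'M[R]_(d.+1) :=
  (N%:R)^-1 *: (Zmat Y X 0 *m Mmask N *m (Zmat Y X 0)^T).

Definition hcoef (lam eps : R) (d N : nat) (i j : 'I_d.+1) (k : 'I_d) : R :=
  fine (Exp lam (fun (Y : 'I_N.+1 -> R) (X : 'M[R]_(N.+1, d)) =>
          ((Gmat Y X) i j * (Y ord_max * X ord_max k - eps))%:E)).

Definition adv_loss (eps : R) (d N : nat) (P Q : 'M[R]_(d.+1))
  (Y : 'I_N.+1 -> R) (X : 'M[R]_(N.+1, d)) : \bar R :=
  ereal_sup [set (- Y ord_max * fTF P Q (Zmat Y X Delta) ord_max ord_max)%:E
            | Delta in [set Delta : 'cV[R]_d | forall k, `|Delta k 0| <= eps]].

Definition adv_obj (lam eps : R) (d N : nat) (P Q : 'M[R]_(d.+1)) : \bar R :=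
  @Exp lam d N (@adv_loss eps d N P Q).

Definition in01 (n m : nat) (A : 'M[R]_(n, m)) : Prop :=
  forall i j, 0 <= A i j <= 1.

Definition Sval (lam eps : R) (d N : nat) (b : {ffun 'I_d.+1 -> bool}) : R :=
  \sum_(j < d.+1) \sum_(k < d)
     Num.max 0 (\sum_(i < d.+1) (b i)%:R * hcoef lam eps N i j k).

Definition Pstar (d : nat) (b : {ffun 'I_d.+1 -> bool}) : 'M[R]_(d.+1) :=
  \matrix_(i, j) (if i == ord_max then (b j)%:R else 0).

Definition Qstar (lam eps : R) (d N : nat) (b : {ffun 'I_d.+1 -> bool}) :
  'M[R]_(d.+1) :=
  \matrix_(j, k')
    match unlift ord_max k' with
    | Some k => ((0 <= \sum_(i < d.+1) (b i)%:R * hcoef lam eps N i j k)%R : bool)%:R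
    | None => 0
    end.

End Defs.

(* Main.v *)
Require Import Defs.
From HB Require Import structures.
From mathcomp Require Import all_boot all_order all_algebra.
From mathcomp Require Import all_classical all_reals all_analysis.
From mathcomp Require Import ring lra.
Import Order.TTheory GRing.Theory Num.Theory numFieldNormedType.Exports.
Local Open Scope ring_scope.
Local Open Scope classical_set_scope.
Set Implicit Arguments. Unset Strict Implicit. Unset Printing Implicit Defensive.

Section S1.

Context {R : realType}.
Definition Dom (lam : R) (b : bool) : set R :=
  if b then [set t : R | (0 <= t <= lam)%R] else [set t : R | (- lam <= t <= 0)%R].

Lemma Dom_itv lam b : Dom lam b = (if b then `[0, lam] else `[-lam, 0])%classic.
Proof. by case: b; apply/seteqP; split => x /=; rewrite in_itv. Qed.

Lemma Dom_int lam b (f : R -> R) : continuous f ->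
  (@lebesgue_measure R).-integrable (Dom lam b) (EFin \o f).
Proof.
move=> cf; rewrite Dom_itv; case: b; apply: continuous_compact_integrable;
  try exact: segment_compact; by apply: continuous_subspaceT.
Qed.

Lemma Dom_meas lam b : measurable (Dom lam b).
Proof. rewrite Dom_itv; case: b; exact: measurable_itv. Qed.
End S1.
Section S2.

Context {R : realType}.
Definition mom (lam : R) b n : R :=
  fine (\int[@lebesgue_measure R]_(t in Dom lam b) (t ^+ n)%:E).

Lemma int_poly (lam : R) b (A : finType) (K : A -> R) (e : A -> nat) :
  (\int[@lebesgue_measure R]_(t in Dom lam b) ((\sum_(a : A) K a * t ^+ e a)%:E)
   = (\sum_a K a * mom lam b (e a))%:E)%E.
Proof.
have intg a : (@lebesgue_measure R).-integrable (Dom lam b)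
   (fun t => (K a * t ^+ e a)%:E).
  apply: (@Dom_int _ lam b (fun t => K a * t ^+ e a)).
  move=> x; apply: cvgMr; exact: exprn_continuous.
under eq_integral do rewrite -sumEFin.
rewrite integral_sum //; last exact: Dom_meas.
rewrite -sumEFin; apply: eq_bigr => a _.
under eq_integral do rewrite EFinM.
have it : (@lebesgue_measure R).-integrable (Dom lam b) (fun t => (t ^+ e a)%:E).
  apply: (@Dom_int _ lam b (fun t => t ^+ e a)); exact: exprn_continuous.
erewrite integralZl; last 2 first. exact: Dom_meas. exact: it.
rewrite /mom EFinM fineK //.
apply: integrable_fin_num => //. exact: Dom_meas.
Qed.
End S2.
Section S4.

Context {R : realType}.

Definition cmom (lam : R) d (c i : 'I_d) (y : bool) (n : nat) : R :=
  if i == c then sgn y ^+ n else lam^-1 * mom lam y n.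

Lemma coord_exp_poly (lam : R) d (c i : 'I_d) y (A : finType) (K : A -> R) (e : A -> nat) :
  coord_exp lam c i y (fun t => (\sum_a K a * t ^+ e a)%:E)
  = (\sum_a K a * cmom lam c i y (e a))%:E.
Proof.
rewrite /coord_exp /cmom; case: eqP => _ //.
have := int_poly lam y K e; rewrite /Dom => ->.
rewrite -EFinM mulr_sumr; congr (_%:E); apply: eq_bigr => a _; ring.
Qed.

Section Iint.
Variables (I : finType) (J : I -> (R -> \bar R) -> \bar R) (cm : I -> nat -> R).
Hypothesis HJ : forall p (A : finType) (K : A -> R) (e : A -> nat),
  J p (fun t => (\sum_a K a * t ^+ e a)%:E) = (\sum_a K a * cm p (e a))%:E.

Definition cfac (s : seq I) (o : I -> option R) (p : I) (n : nat) : R :=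
  match o p with Some t => t ^+ n | None => if p \in s then cm p n else 0 ^+ n end.

Lemma iint_poly (A : finType) (w : A -> R) (e : A -> I -> nat) (s : seq I) :
  forall o : I -> option R, uniq s -> (forall p, p \in s -> o p = None) ->
  iint J s (fun g => (\sum_a w a * \prod_p (odflt (g p) (o p)) ^+ e a p)%:E) =
  (\sum_a w a * \prod_p cfac s o p (e a p))%:E.
Proof.
elim: s => [|i s IH] o.
  move=> _ _ /=; congr (_%:E); apply: eq_bigr => a _; congr (_ * _).
  by apply: eq_bigr => p _; rewrite /cfac; case: (o p).
move=> /= /andP[iNs us] os.
have oi : o i = None by apply: os; rewrite inE eqxx.
pose Ra a := \prod_(p | p != i) cfac (i :: s) o p (e a p).
transitivity (J i (fun t => (\sum_a (w a * Ra a) * t ^+ e a i)%:E)).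
  congr (J i _); apply: funext => t.
  pose o' := fun p => if p == i then Some t else o p.
  have -> : (fun g : I -> R => (\sum_a w a * \prod_p
      odflt ((fun j => if j == i then t else g j) p) (o p) ^+ e a p)%:E)
     = (fun g => (\sum_a w a * \prod_p odflt (g p) (o' p) ^+ e a p)%:E).
    apply: funext => g; congr (_%:E); apply: eq_bigr => a _; congr (_ * _).
    apply: eq_bigr => p _; rewrite /o'; case: eqP => [->|//].
    by rewrite oi.
  rewrite IH //; last first.
    move=> p ps; rewrite /o'; case: eqP => [pi|_]; last by apply: os; rewrite inE ps orbT.
    by rewrite -pi ps in iNs.
  congr (_%:E); apply: eq_bigr => a _.
  rewrite (bigD1 i) //= {1}/cfac /o' eqxx -mulrA; congr (_ * _).
  rewrite mulrC; congr (_ * _); apply: eq_bigr => p pi.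
  by rewrite /cfac (negbTE pi) inE (negbTE pi).
rewrite HJ; congr (_%:E); apply: eq_bigr => a _.
rewrite [in RHS](bigD1 i) //= /cfac oi inE eqxx /=.
rewrite /Ra /cfac; ring.
Qed.
End Iint.
End S4.

Section S5.
Context {R : realType}.

Definition Ecl (lam : R) d N (wa : ('I_N.+1 -> R) -> R) (ea : 'I_N.+1 * 'I_d -> nat) : R :=
  \sum_(c < d) (d%:R)^-1 * \sum_(y : {ffun 'I_N.+1 -> bool})
     (2%:R ^- N.+1 * (wa (fun n => sgn (y n)) *
        \prod_(p : 'I_N.+1 * 'I_d) cmom lam c p.2 (y p.1) (ea p))).

Lemma Exp_poly (lam : R) d N (A : finType) (w : A -> ('I_N.+1 -> R) -> R)
   (e : A -> 'I_N.+1 * 'I_d -> nat) :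
  Exp lam (fun (Y : 'I_N.+1 -> R) (X : 'M[R]_(N.+1, d)) =>
    (\sum_a w a Y * \prod_(p : 'I_N.+1 * 'I_d) (X p.1 p.2) ^+ e a p)%:E)
  = (\sum_a Ecl lam (w a) (e a))%:E.
Proof.
rewrite /Exp /Ecl.
transitivity (\sum_(c < d) ((d%:R)^-1)%:E * \sum_(y : {ffun 'I_N.+1 -> bool})
   ((2%:R ^- N.+1)%:E * (\sum_a w a (fun n => sgn (y n)) *
     \prod_(p : 'I_N.+1 * 'I_d) cmom lam c p.2 (y p.1) (e a p))%:E))%E.
  apply: eq_bigr => c _; congr (_ * _)%E; apply: eq_bigr => y _; congr (_ * _)%E.
  transitivity (iint (fun p : 'I_N.+1 * 'I_d => coord_exp lam c p.2 (y p.1))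
     (enum {: 'I_N.+1 * 'I_d})
     (fun g => (\sum_a w a (fun n => sgn (y n)) *
         \prod_p odflt (g p) ((fun _ => None) p) ^+ e a p)%:E)).
    congr (iint _ _ _); apply: funext => g; congr (_%:E); apply: eq_bigr => a _.
    by congr (_ * _); apply: eq_bigr => -[n k] _; rewrite mxE.
  rewrite (@iint_poly _ _ _ (fun p n => cmom lam c p.2 (y p.1) n)) //.
  - congr (_%:E); apply: eq_bigr => a _; congr (_ * _); apply: eq_bigr => p _.
    by rewrite /cfac mem_enum.
  - by move=> p B K e'; exact: coord_exp_poly.
  - exact: enum_uniq.
under eq_bigr do under eq_bigr do rewrite -EFinM.
under eq_bigr do rewrite sumEFin -EFinM.
rewrite sumEFin; congr (_%:E).
rewrite exchange_big /=; apply: eq_bigr => c _.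
rewrite -[in RHS]mulr_sumr; congr (_ * _).
rewrite exchange_big /=; apply: eq_bigr => y _.
by rewrite -[in RHS]mulr_sumr.
Qed.
End S5.

Section S6.
Context {R : realType}.

Definition valid N d (Y : 'I_N.+1 -> R) (X : 'M[R]_(N.+1, d)) :=
  (forall n, Y n = 1 \/ Y n = -1) /\ (forall n k, 0 <= Y n * X n k).

Lemma iint_cong (I : eqType) (J : I -> (R -> \bar R) -> \bar R) (D : I -> R -> Prop) :
  (forall p f f', (forall t, D p t -> f t = f' t) -> J p f = J p f') ->
  forall s F F', (forall g, (forall p, p \in s -> D p (g p)) -> F g = F' g) ->
  iint J s F = iint J s F'.
Proof.
move=> HJ; elim=> [|i s IH] F F' HF /=; first by apply: HF => p.
apply: HJ => t Dt; apply: IH => g Hg; apply: HF => p.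
rewrite inE; case: (eqVneq p i) => [->|pi] /=; first by [].
exact: Hg.
Qed.

Definition CD (lam : R) d (c i : 'I_d) (y : bool) (t : R) : Prop :=
  if i == c then t = sgn y else Dom lam y t.

Lemma coord_exp_cong (lam : R) d (c i : 'I_d) y f f' :
  (forall t, CD lam c i y t -> f t = f' t) ->
  coord_exp lam c i y f = coord_exp lam c i y f'.
Proof.
rewrite /coord_exp /CD; case: eqP => _ H; first exact: H.
congr (_ * _)%E; apply: eq_integral => t; rewrite inE => Dt; exact: H.
Qed.

Lemma Exp_cong (lam : R) d N F F' :
  (forall (Y : 'I_N.+1 -> R) (X : 'M[R]_(N.+1, d)), valid Y X -> F Y X = F' Y X) ->
  Exp lam F = Exp lam F'.
Proof.
move=> HF; rewrite /Exp; apply: eq_bigr => c _; congr (_ * _)%E.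
apply: eq_bigr => y _; congr (_ * _)%E.
apply: (@iint_cong _ _ (fun p t => CD lam c p.2 (y p.1) t)).
  by move=> p f f' H; apply: coord_exp_cong.
move=> g Hg; apply: HF; split.
  by move=> n; rewrite /sgn; case: (y n); [left|right].
move=> n k; rewrite mxE.
have := Hg (n, k) (mem_enum _ _); rewrite /CD /=; case: eqP => _.
  by move=> ->; rewrite /sgn; case: (y n); rewrite ?mulr1 ?mulNr ?mulr1 ?opprK.
rewrite /Dom /sgn; case: (y n) => /= /andP[h1 h2]; first by rewrite mul1r.
by rewrite mulN1r oppr_ge0.
Qed.
End S6.

Section S7.
Context {R : realType}.
Variables (d N : nat).
Implicit Types (Y : 'I_N.+1 -> R) (X : 'M[R]_(N.+1, d)) (Delta : 'cV[R]_d).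

Lemma ZM_entry Y X Delta i n :
  (Zmat Y X Delta *m Mmask N) i n = if n == ord_max then 0 else Zmat Y X 0 i n.
Proof.
rewrite mxE (bigD1 n) //= big1 => [|n' nn']; last by rewrite !mxE (negbTE nn') mulr0.
rewrite !mxE eqxx /= addr0; case: eqVneq => [->|nq]; first by rewrite mulr0.
by rewrite mulr1.
Qed.

Lemma ZM Y X Delta : Zmat Y X Delta *m Mmask N = Zmat Y X 0 *m Mmask N.
Proof. by apply/matrixP => i n; rewrite !ZM_entry. Qed.

Lemma Mmask_tr : (Mmask N)^T = Mmask N :> 'M[R]_N.+1.
Proof.
apply/matrixP => i j; rewrite !mxE; case: eqVneq => [->//|ij].
by [].
Qed.

Lemma MZT Y X Delta : Mmask N *m (Zmat Y X Delta)^T = Mmask N *m (Zmat Y X 0)^T.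
Proof.
by rewrite -[Mmask N]Mmask_tr -!trmx_mul ZM.
Qed.

Lemma fTF_entry (P Q : 'M[R]_d.+1) Y X Delta :
  fTF P Q (Zmat Y X Delta) ord_max ord_max =
  \sum_(k < d) (P *m Gmat Y X *m Q) ord_max (lift ord_max k) * (X ord_max k + Delta k 0).
Proof.
rewrite /fTF.
have -> : P *m Zmat Y X Delta *m Mmask N *m (Zmat Y X Delta)^T
          = P *m (Zmat Y X 0 *m Mmask N *m (Zmat Y X 0)^T).
  by rewrite -[P *m _ *m Mmask N]mulmxA (ZM Y X Delta) -!mulmxA (MZT Y X Delta).
rewrite /Gmat mxE mxE (bigD1_ord ord_max) //=.
rewrite [Zmat _ _ _ ord_max ord_max]mxE unlift_none eqxx mulr0 add0r.
rewrite mulr_sumr; apply: eq_bigr => k _.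
rewrite [Zmat _ _ _ _ ord_max]mxE liftK eqxx -scalemxAr scalemxAl.
rewrite -!scalemxAl; set T := (P *m _ *m Q). by rewrite [in RHS]mxE mulrA.
Qed.

Lemma Z0_sign Y X i n : valid Y X -> 0 <= Y n * Zmat Y X 0 i n.
Proof.
move=> [HY HX]; rewrite mxE; case: unlift => [k|].
  by rewrite mxE; case: eqP => _; rewrite addr0.
case: eqP => _; first by rewrite mulr0.
by case: (HY n) => ->; rewrite ?mulr1 ?mulrNN ?mulr1.
Qed.

Lemma G_ge0 Y X i j : valid Y X -> 0 <= Gmat Y X i j.
Proof.
move=> V; rewrite /Gmat mxE; apply: mulr_ge0; first by rewrite invr_ge0.
rewrite mxE; apply: sumr_ge0 => n _; rewrite ZM_entry.
have -> : (Zmat Y X 0)^T n j = Zmat Y X 0 j n by rewrite mxE.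
case: eqP => _; first by rewrite mul0r.
have Y2 : Y n * Y n = 1 by case: V => HY _; case: (HY n) => ->; rewrite ?mulr1 ?mulrNN ?mulr1.
move: (Z0_sign i n V) (Z0_sign j n V).
move: (Zmat Y X 0 i n) (Zmat Y X 0 j n) => a b ha hb.
have -> : a * b = (Y n * a) * (Y n * b) by rewrite mulrACA Y2 mul1r.
exact: mulr_ge0.
Qed.

Lemma W_ge0 (P Q : 'M[R]_d.+1) Y X a b : in01 P -> in01 Q -> valid Y X ->
  0 <= (P *m Gmat Y X *m Q) a b.
Proof.
move=> HP HQ V; rewrite mxE; apply: sumr_ge0 => j _; apply: mulr_ge0; last by case/andP: (HQ j b).
rewrite mxE; apply: sumr_ge0 => i _; apply: mulr_ge0; last exact: G_ge0.
by case/andP: (HP a i).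
Qed.

Lemma adv_loss_eq (eps : R) (P Q : 'M[R]_d.+1) Y X :
  0 <= eps -> in01 P -> in01 Q -> valid Y X ->
  adv_loss eps P Q Y X = (- \sum_(k < d) (P *m Gmat Y X *m Q) ord_max (lift ord_max k)
      * (Y ord_max * X ord_max k - eps))%:E.
Proof.
move=> e0 HP HQ V.
have W0 k : 0 <= (P *m Gmat Y X *m Q) ord_max (lift ord_max k) by apply: W_ge0.
have Yq : Y ord_max = 1 \/ Y ord_max = -1 by case: V.
apply/le_anti/andP; split.
- apply: ge_ereal_sup => _ [Delta HD <-]; rewrite lee_fin fTF_entry.
  rewrite mulr_sumr -sumrN; apply: ler_sum => k _.
  have := HD k; rewrite ler_norml => /andP[h1 h2].
  have := W0 k; move: (X ord_max k) (Delta k 0) h1 h2 => x t h1 h2 w0.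
  move: ((P *m Gmat Y X *m Q) ord_max (lift ord_max k)) w0 => w w0.
  by case: Yq => ->; nra.
- apply: ereal_sup_ubound; exists (\col_k (- Y ord_max * eps)).
    move=> k; rewrite mxE normrM normrN.
    by case: Yq => ->; rewrite ?normrN normr1 mul1r ger0_norm.
  congr (_%:E); rewrite fTF_entry mulr_sumr -sumrN; apply: eq_bigr => k _.
  by rewrite !mxE; case: Yq => ->; ring.
Qed.

Definition zc (i : 'I_d.+1) (n : 'I_N.+1) Y : R :=
  if unlift ord_max i is Some _ then 1 else Y n.
Definition ze (i : 'I_d.+1) (n : 'I_N.+1) (p : 'I_N.+1 * 'I_d) : nat :=
  if unlift ord_max i is Some k then (p == (n, k)) else 0%N.

Lemma prod_delta X (q : 'I_N.+1 * 'I_d) :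
  \prod_(p : 'I_N.+1 * 'I_d) X p.1 p.2 ^+ (p == q) = X q.1 q.2.
Proof.
rewrite (bigD1 q) //= eqxx expr1 big1 ?mulr1 // => p pq.
by rewrite (negbTE pq) expr0.
Qed.

Lemma Z0_mono Y X i n : n != ord_max ->
  Zmat Y X 0 i n = zc i n Y * \prod_(p : 'I_N.+1 * 'I_d) X p.1 p.2 ^+ ze i n p.
Proof.
move=> nq; rewrite mxE /zc /ze; case: unlift => [k|].
  by rewrite prod_delta mxE mul1r (negbTE nq) addr0.
rewrite (negbTE nq); under eq_bigr do rewrite expr0. by rewrite big1_eq mulr1.
Qed.

Definition wH (eps : R) (i j : 'I_d.+1) (a : 'I_N.+1 * bool) Y : R :=
  (N%:R)^-1 * (a.1 != ord_max)%:R * zc i a.1 Y * zc j a.1 Y *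
  (if a.2 then Y ord_max else - eps).
Definition eH (i j : 'I_d.+1) (k : 'I_d) (a : 'I_N.+1 * bool) (p : 'I_N.+1 * 'I_d) : nat :=
  (ze i a.1 p + ze j a.1 p + (if a.2 then (p == (ord_max, k)) : nat else 0))%N.

Lemma H_mono (eps : R) Y X i j k :
  Gmat Y X i j * (Y ord_max * X ord_max k - eps) =
  \sum_(a : 'I_N.+1 * bool) wH eps i j a Y *
     \prod_(p : 'I_N.+1 * 'I_d) X p.1 p.2 ^+ eH i j k a p.
Proof.
transitivity (\sum_(n : 'I_N.+1) \sum_(b : bool) wH eps i j (n, b) Y *
     \prod_(p : 'I_N.+1 * 'I_d) X p.1 p.2 ^+ eH i j k (n, b) p); last first.
  by rewrite pair_bigA; apply: eq_bigr => -[n b].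
rewrite /Gmat mxE mxE mulr_sumr mulr_suml; apply: eq_bigr => n _.
rewrite big_bool /= ZM_entry /wH /=.
case: eqVneq => [->|nq]; first by rewrite !mulr0 !mul0r mulr0 !mul0r addr0.
rewrite mulr1 [(Zmat Y X 0)^T _ _]mxE (Z0_mono _ _ i nq) (Z0_mono _ _ j nq).
have E1 : \prod_p X p.1 p.2 ^+ eH i j k (n, true) p =
    \prod_p X p.1 p.2 ^+ ze i n p * \prod_p X p.1 p.2 ^+ ze j n p * X ord_max k.
  rewrite /eH /=; under eq_bigr do rewrite !exprD.
  by rewrite !big_split /= prod_delta.
have E2 : \prod_p X p.1 p.2 ^+ eH i j k (n, false) p =
    \prod_p X p.1 p.2 ^+ ze i n p * \prod_p X p.1 p.2 ^+ ze j n p.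
  rewrite /eH /=; under eq_bigr do rewrite addn0 !exprD.
  by rewrite !big_split.
rewrite E1 E2.
ring.
Qed.

Lemma Ecl_scale (lam c : R) (w : ('I_N.+1 -> R) -> R) (e : 'I_N.+1 * 'I_d -> nat) :
  Ecl lam (fun Y => c * w Y) e = c * Ecl lam w e.
Proof.
rewrite /Ecl mulr_sumr; apply: eq_bigr => c' _.
rewrite mulrCA; congr (_ * _); rewrite mulr_sumr; apply: eq_bigr => y _.
by rewrite !mulrA [c * _]mulrC.
Qed.

Lemma hcoef_eq (lam eps : R) i j k :
  hcoef lam eps N i j k = \sum_a Ecl lam (wH eps i j a) (eH i j k a).
Proof.
rewrite /hcoef.
have -> : (fun (Y : 'I_N.+1 -> R) (X : 'M[R]_(N.+1, d)) =>
     (Gmat Y X i j * (Y ord_max * X ord_max k - eps))%:E) =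
   (fun Y X => (\sum_(a : 'I_N.+1 * bool) wH eps i j a Y *
     \prod_(p : 'I_N.+1 * 'I_d) X p.1 p.2 ^+ eH i j k a p)%:E).
  by apply: funext => Y; apply: funext => X; rewrite H_mono.
by rewrite (Exp_poly lam (fun a => wH eps i j a) (fun a => eH i j k a)).
Qed.

Definition objv (lam eps : R) (P Q : 'M[R]_d.+1) : R :=
  \sum_(k < d) \sum_(j < d.+1) \sum_(i < d.+1)
     P ord_max i * Q j (lift ord_max k) * hcoef lam eps N i j k.

Lemma adv_obj_eq (lam eps : R) (P Q : 'M[R]_d.+1) :
  0 <= eps -> in01 P -> in01 Q ->
  adv_obj lam eps N P Q = (- objv lam eps P Q)%:E.
Proof.
move=> e0 HP HQ.
pose c (u : 'I_d * 'I_d.+1 * 'I_d.+1) := - (P ord_max u.2 * Q u.1.2 (lift ord_max u.1.1)).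
rewrite /adv_obj (@Exp_cong _ lam d N _ (fun Y X =>
   (\sum_(u : 'I_d * 'I_d.+1 * 'I_d.+1 * ('I_N.+1 * bool))
      (c u.1 * wH eps u.1.2 u.1.1.2 u.2 Y) *
      \prod_(p : 'I_N.+1 * 'I_d) X p.1 p.2 ^+ eH u.1.2 u.1.1.2 u.1.1.1 u.2 p)%:E)).
  rewrite (Exp_poly lam (fun u => fun Y => c u.1 * wH eps u.1.2 u.1.1.2 u.2 Y)
                        (fun u => eH u.1.2 u.1.1.2 u.1.1.1 u.2)).
  congr (_%:E); rewrite /objv -sumrN; symmetry.
  under eq_bigr do rewrite -sumrN; under eq_bigr do under eq_bigr do rewrite -sumrN.
  under eq_bigr do under eq_bigr do under eq_bigr do rewrite hcoef_eq mulr_sumr -sumrN.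
  rewrite [LHS]pair_bigA [LHS]pair_bigA [LHS]pair_bigA; apply: eq_bigr => -[[[k j] i] a] _.
  by rewrite Ecl_scale /c mulNr.
move=> Y X V; rewrite adv_loss_eq //; congr (_%:E).
rewrite -sumrN.
under eq_bigr => k _.
  rewrite mxE mulr_suml -sumrN.
  under eq_bigr => j _.
    rewrite mxE !mulr_suml -sumrN.
    under eq_bigr => i _.
      rewrite -mulrA.
      have -> : P ord_max i * Gmat Y X i j *
          (Q j (lift ord_max k) * (Y ord_max * X ord_max k - eps)) =
        (P ord_max i * Q j (lift ord_max k)) *
          (Gmat Y X i j * (Y ord_max * X ord_max k - eps)) by ring.
      rewrite H_mono mulr_sumr -sumrN.
      over.
    over.
  over.
rewrite [LHS]pair_bigA [LHS]pair_bigA [LHS]pair_bigA; apply: eq_bigr => -[[[k j] i] a] _.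
rewrite /c /=; ring.
Qed.
End S7.

Section Opt.
Variables (R : realFieldType) (n m : nat) (h : 'I_n -> 'I_n -> 'I_m -> R).

Definition Sf (p : 'I_n -> R) : R :=
  \sum_(j < n) \sum_(k < m) Num.max 0 (\sum_(i < n) p i * h i j k).

Definition upd (p : 'I_n -> R) i (v : R) := fun l => if l == i then v else p l.

Lemma lin_split (p : 'I_n -> R) (g : 'I_n -> R) i :
  \sum_l p l * g l = (1 - p i) * \sum_l upd p i 0 l * g l + p i * \sum_l upd p i 1 l * g l.
Proof.
have HD (q : 'I_n -> R) : \sum_l q l * g l = q i * g i + \sum_(l | l != i) q l * g l.
  by rewrite (bigD1 i).
rewrite !HD /upd eqxx.
have E b : \sum_(l | l != i) (if l == i then b else p l) * g l = \sum_(l | l != i) p l * g l.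
  by apply: eq_bigr => l li; rewrite (negbTE li).
rewrite !E; ring.
Qed.

Lemma max_conv (t x y : R) : 0 <= t <= 1 ->
  Num.max 0 ((1 - t) * x + t * y) <= (1 - t) * Num.max 0 x + t * Num.max 0 y.
Proof.
move=> /andP[t0 t1].
have hx0 : 0 <= Num.max 0 x by rewrite le_max lexx.
have hx : x <= Num.max 0 x by rewrite le_max lexx orbT.
have hy0 : 0 <= Num.max 0 y by rewrite le_max lexx.
have hy : y <= Num.max 0 y by rewrite le_max lexx orbT.
have t1' : 0 <= 1 - t by rewrite subr_ge0.
rewrite ge_max; apply/andP; split.
  by apply: addr_ge0; apply: mulr_ge0.
by apply: lerD; apply: ler_wpM2l.
Qed.

Lemma Sf_conv (p : 'I_n -> R) i : 0 <= p i <= 1 ->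
  Sf p <= Num.max (Sf (upd p i 0)) (Sf (upd p i 1)).
Proof.
move=> hp; apply: (@le_trans _ _ ((1 - p i) * Sf (upd p i 0) + p i * Sf (upd p i 1))).
  rewrite /Sf !mulr_sumr -big_split /=; apply: ler_sum => j _.
  rewrite !mulr_sumr -big_split /=; apply: ler_sum => k _.
  rewrite (lin_split _ (fun l => h l j k) i); exact: max_conv.
case/andP: hp => t0 t1.
have h0 : Sf (upd p i 0) <= Num.max (Sf (upd p i 0)) (Sf (upd p i 1)) by rewrite le_max lexx.
have h1 : Sf (upd p i 1) <= Num.max (Sf (upd p i 0)) (Sf (upd p i 1)) by rewrite le_max lexx orbT.
have t1' : 0 <= 1 - p i by rewrite subr_ge0.
apply: le_trans (lerD (ler_wpM2l t1' h0) (ler_wpM2l t0 h1)) _.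
by rewrite -mulrDl subrK mul1r.
Qed.

Lemma cube_vertex (s : seq 'I_n) : forall p : 'I_n -> R,
  (forall i, 0 <= p i <= 1) -> (forall i, i \notin s -> p i = 0 \/ p i = 1) ->
  exists b : {ffun 'I_n -> bool}, Sf p <= Sf (fun i => (b i)%:R).
Proof.
elim: s => [|i s IH] p hp hb.
  exists [ffun i => p i == 1]; rewrite le_eqVlt; apply/orP; left; apply/eqP.
  rewrite /Sf; apply: eq_bigr => j _; apply: eq_bigr => k _.
  congr (Num.max 0 _); apply: eq_bigr => l _; rewrite ffunE; congr (_ * _).
  by case: (hb l (negbT (in_nil l))) => ->; rewrite ?eqxx // eq_sym oner_eq0.
have hv v l : v = 0 \/ v = 1 -> 0 <= upd p i v l <= 1.
  by rewrite /upd; case: eqP => _ // [] ->; rewrite ?lexx ?ler01.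
have hbv v l : v = 0 \/ v = 1 -> l \notin s -> upd p i v l = 0 \/ upd p i v l = 1.
  move=> hvv ls; rewrite /upd; case: eqP => [_|li] //; apply: hb.
  by rewrite inE negb_or ls andbT; apply/eqP.
have [b0 H0] := IH (upd p i 0) (hv 0 ^~ (or_introl erefl)) (hbv 0 ^~ (or_introl erefl)).
have [b1 H1] := IH (upd p i 1) (hv 1 ^~ (or_intror erefl)) (hbv 1 ^~ (or_intror erefl)).
have := Sf_conv (hp i); rewrite le_max => /orP[] H.
  by exists b0; apply: le_trans H H0.
by exists b1; apply: le_trans H H1.
Qed.
End Opt.


Section Final.
Context {R : realType}.
Variables (d N : nat) (lam eps : R).

Lemma objv_le (P Q : 'M[R]_d.+1) : in01 P -> in01 Q ->
  objv N lam eps P Q <= Sf (fun i j k => hcoef lam eps N i j k) (fun i => P ord_max i).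
Proof.
move=> HP HQ; rewrite /objv /Sf exchange_big /=; apply: ler_sum => j _.
apply: ler_sum => k _.
have -> : \sum_(i < d.+1) P ord_max i * Q j (lift ord_max k) * hcoef lam eps N i j k
   = Q j (lift ord_max k) * \sum_(i < d.+1) P ord_max i * hcoef lam eps N i j k.
  by rewrite mulr_sumr; apply: eq_bigr => i _; rewrite mulrCA mulrA.
move: (\sum_(i < d.+1) _) => x; have /andP[q0 q1] := HQ j (lift ord_max k).
have [x0|x0] := leP 0 x.
  by rewrite -[leRHS]mul1r ler_wpM2r.
by rewrite mulr_ge0_le0 // ltW.
Qed.

Lemma objv_star (b : {ffun 'I_d.+1 -> bool}) :
  objv N lam eps (Pstar b) (Qstar lam eps N b) = Sval lam eps N b.
Proof.
rewrite /objv /Sval exchange_big /=; apply: eq_bigr => j _; apply: eq_bigr => k _.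

have -> : \sum_(i < d.+1) Pstar b ord_max i * Qstar lam eps N b j (lift ord_max k)
            * hcoef lam eps N i j k
   = ((0 <= \sum_(i < d.+1) (b i)%:R * hcoef lam eps N i j k)%R : bool)%:R *
     \sum_(i < d.+1) (b i)%:R * hcoef lam eps N i j k.
  rewrite mulr_sumr; apply: eq_bigr => i _.
  by rewrite !mxE eqxx liftK mulrCA mulrA.
move: (\sum_(i < d.+1) _) => x.
by have [x0|x0] := leP 0 x; rewrite ?mul1r ?mul0r.
Qed.

End Final.

Theorem lemma3p1 (R : realType) (d N : nat) (lam eps : R) :
  (0 < d)%N -> (0 < N)%N -> 0 < lam < 1 -> 0 <= eps ->
  let S := fun b : {ffun 'I_d.+1 -> bool} => Sval lam eps N b in
  let V := \big[Num.max/0]_(b : {ffun 'I_d.+1 -> bool}) S b in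
  ((exists P Q : 'M[R]_d.+1,
      in01 P /\ in01 Q /\ adv_obj lam eps N P Q = (- V)%:E) /\
   (forall P Q : 'M[R]_d.+1, in01 P -> in01 Q ->
      ((- V)%:E <= adv_obj lam eps N P Q)%E)) /\
  (forall bstar : {ffun 'I_d.+1 -> bool},
     (forall b, S b <= S bstar) ->
     in01 (Pstar bstar : 'M[R]_d.+1) /\ in01 (Qstar lam eps N bstar) /\
     (forall P Q : 'M[R]_d.+1, in01 P -> in01 Q ->
        (adv_obj lam eps N (Pstar bstar) (Qstar lam eps N bstar)
           <= adv_obj lam eps N P Q)%E)).
Proof.
move=> d0 N0 _ e0 S V.
have S0 b : 0 <= S b.
  rewrite /S /Sval; apply: sumr_ge0 => j _; apply: sumr_ge0 => k _.
  by rewrite le_max lexx.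
have VE bs : (forall b, S b <= S bs) -> V = S bs.
  move=> Hb; apply/le_anti/andP; split; last exact: le_bigmax.
  by apply: bigmax_le => // b _; apply: Hb.
have SV b : S b <= V by apply: le_bigmax.
have lower (P Q : 'M[R]_d.+1) : in01 P -> in01 Q -> ((- V)%:E <= adv_obj lam eps N P Q)%E.
  move=> HP HQ; rewrite adv_obj_eq // lee_fin lerN2.
  apply: le_trans (@objv_le _ d N lam eps P Q HP HQ) _.
  have [b Hb] := @cube_vertex _ _ _ (fun i j k => hcoef lam eps N i j k)
     (enum 'I_d.+1) (fun i => P ord_max i) (fun i => HP ord_max i)
     (fun i hi => False_ind _ (negP hi (mem_enum _ i))).
  by apply: le_trans Hb _; apply: SV.
have B01 (c : bool) : (0 : R) <= c%:R <= 1 by case: c; rewrite ?lexx ?ler01.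
have in01P (b : {ffun 'I_d.+1 -> bool}) : in01 (Pstar b : 'M[R]_d.+1).
  by move=> i j; rewrite mxE; case: eqP => _; [exact: B01|rewrite lexx ler01].
have in01Q (b : {ffun 'I_d.+1 -> bool}) : in01 (Qstar lam eps N b).
  move=> i j; rewrite mxE; case: unlift => [k|]; [exact: B01|by rewrite lexx ler01].
have achieve bs : (forall b, S b <= S bs) ->
    adv_obj lam eps N (Pstar bs) (Qstar lam eps N bs) = (- V)%:E.
  by move=> Hb; rewrite adv_obj_eq // objv_star (VE bs Hb).
have [bs _ Hbs] := @arg_maxP _ _ {ffun 'I_d.+1 -> bool} [ffun=> false] xpredT S isT.
split; first split.
- exists (Pstar bs), (Qstar lam eps N bs); split; first exact: in01P.
  split; first exact: in01Q.
  by apply: achieve => b; apply: Hbs.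
- exact: lower.
move=> b Hb; split; first exact: in01P.
split; first exact: in01Q.
by move=> P Q HP HQ; rewrite achieve //; apply: lower.
Qed.
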